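(* Let $Y$ be an $n\times n$ matrix each of whose entries is either $0$ or an indeterminate, with distinct nonzero entries being distinct indeterminates over a field $K$, and suppose that the graph $G(Y)$ is a cycle of length $2n$. For $k\ge1$ let $J_k$ be the ideal of $k$-minors of $Y$. Then for all $k<n$, $$J_k=\Big(\prod_{v\in A}v \;:\; A \text{ an independent set of } G(Y) \text{ with } |A|=k\Big).$$
   Context: For a matrix $Z=(z_{ij})$, the graph $G(Z)$ has as vertices the nonzero entries $z_{ij}$, and two vertices $z_{ij},z_{hk}$ are adjacent iff $i=h$ or $j=k$. An independent set is a set of pairwise non-adjacent vertices. *)

(* Defs.v *)
From HB Require Import structures.
From mathcomp Require Import all_boot all_order all_algebra.
From mathcomp Require Import mpoly.
Set Implicit Arguments. Unset Strict Implicit. Unset Printing Implicit Defensive.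
Import GRing.Theory.
Local Open Scope ring_scope.

(* Support of a matrix: positions of nonzero entries = vertices of G(Z). *)
Definition mxsupp (R : nzRingType) (n : nat) (Z : 'M[R]_n) : {set 'I_n * 'I_n} :=
  [set u | Z u.1 u.2 != 0].

Definition mxadj (n : nat) (u v : 'I_n * 'I_n) : bool :=
  (u != v) && ((u.1 == v.1) || (u.2 == v.2)).

Definition mx_indep (R : nzRingType) (n : nat) (Z : 'M[R]_n) (A : {set 'I_n * 'I_n}) :=
  A \subset mxsupp Z /\ forall u v, u \in A -> v \in A -> ~~ mxadj u v.

Definition is_cycle_graph (T : finType) (V : {set T}) (adj : rel T) (L : nat) :=
  exists f : 'I_L -> T,
    [/\ injective f,
        (forall v, v \in V <-> exists a, f a = v)
      & forall a b : 'I_L,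
          adj (f a) (f b) = ((val b == (val a).+1 %% L)%N || (val a == (val b).+1 %% L)%N)].

Definition is_minor (R : comNzRingType) (n k : nat) (Z : 'M[R]_n) (p : R) :=
  exists (f g : 'I_k -> 'I_n),
    [/\ {homo f : x y / (x < y)%N >-> (x < y)%N},
        {homo g : x y / (x < y)%N >-> (x < y)%N}
      & p = \det (\matrix_(i, j) Z (f i) (g j))].

Definition in_ideal_gen (R : comNzRingType) (P : R -> Prop) (p : R) :=
  exists s : seq (R * R), (forall q, q \in s -> P q.2) /\
    p = \sum_(q <- s) q.1 * q.2.

(* Main.v *)
Require Import Defs.
From HB Require Import structures.
From mathcomp Require Import all_boot all_order all_algebra.
From mathcomp Require Import mpoly.
From mathcomp Require Import fingroup perm.
From mathcomp Require Import zify.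
Import GRing.Theory.
Local Open Scope ring_scope.

Section Ideal.
Variable R : comNzRingType.
Implicit Types P Q : R -> Prop.

Lemma ideal0 P : in_ideal_gen P 0.
Proof. by exists [::]; split => //; rewrite big_nil. Qed.

Lemma idealD P a b : in_ideal_gen P a -> in_ideal_gen P b -> in_ideal_gen P (a + b).
Proof.
case=> s1 [H1 ->] [s2 [H2 ->]]; exists (s1 ++ s2); split; last by rewrite big_cat.
by move=> q; rewrite mem_cat => /orP [/H1|/H2].
Qed.

Lemma idealM P c a : in_ideal_gen P a -> in_ideal_gen P (c * a).
Proof.
case=> s [H ->]; exists [seq (c * q.1, q.2) | q <- s]; split.
  by move=> q /mapP [q' /H Hq' ->].
by rewrite big_map mulr_sumr; apply: eq_bigr => q _; rewrite mulrA.
Qed.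

Lemma ideal_gen P q : P q -> in_ideal_gen P q.
Proof.
by move=> Hq; exists [:: (1, q)]; split; [move=> q'; rewrite inE => /eqP -> | rewrite big_seq1 mul1r].
Qed.

Lemma ideal_sum P (I : Type) (r : seq I) (F : I -> R) :
  (forall i, in_ideal_gen P (F i)) -> in_ideal_gen P (\sum_(i <- r) F i).
Proof.
move=> H; elim: r => [|i r IH]; first by rewrite big_nil; exact: ideal0.
by rewrite big_cons; apply: idealD.
Qed.

Lemma ideal_trans P Q p : (forall q, P q -> in_ideal_gen Q q) ->
  in_ideal_gen P p -> in_ideal_gen Q p.
Proof.
move=> HPQ [s [Hs ->]]; elim: s Hs => [|q s IH] Hs; first by rewrite big_nil; exact: ideal0.
rewrite big_cons; apply: idealD; first by apply: idealM; apply: HPQ; apply: Hs; rewrite inE eqxx.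
by apply: IH => q' Hq'; apply: Hs; rewrite inE Hq' orbT.
Qed.
End Ideal.

Lemma mod_succ_inj L (b c : nat) : (b < L)%N -> (c < L)%N -> (b.+1 %% L = c.+1 %% L)%N -> b = c.
Proof.
move=> hb hc.
have E : forall x, (x < L)%N -> (x.+1 %% L = if x.+1 == L then 0 else x.+1)%N.
  move=> x hx; case: eqP => [->|ne]; first by rewrite modnn.
  by rewrite modn_small //; rewrite ltn_neqAle hx andbT; apply/eqP.
rewrite (E b hb) (E c hc).
case: eqP => hb1; case: eqP => hc1; lia.
Qed.

Lemma cycle_closed (T : finType) (V : {set T}) (adj : rel T) L
  (C : is_cycle_graph V adj L) (S : {set T}) :
  (forall v, v \in S -> v \in V) ->
  (forall v, v \in S -> exists u w, [/\ u \in S, w \in S, u != w, adj v u & adj v w]) ->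
  forall v, v \in S -> (L <= #|S|)%N.
Proof.
case: C => F [Finj FV Fadj] SV Scl v vS.
have [a0 Ea0] := (FV v).1 (SV v vS).
have Lpos : (0 < L)%N := leq_ltn_trans (leq0n _) (ltn_ord a0).
pose succ (a : 'I_L) : 'I_L := Ordinal (ltn_pmod (val a).+1 Lpos).
have step : forall a, F a \in S -> F (succ a) \in S.
  move=> a Ha; have [u [w [uS wS uw au aw]]] := Scl _ Ha.
  have [b Eb] := (FV u).1 (SV u uS).
  have [c Ec] := (FV w).1 (SV w wS).
  move: au aw; rewrite -Eb -Ec !Fadj.
  have [Hb|Hb] := eqVneq (val b) ((val a).+1 %% L)%N.
    move=> _ _; have -> : succ a = b by apply: val_inj; rewrite /= Hb.
    by rewrite Eb.
  have [Hc|Hc] := eqVneq (val c) ((val a).+1 %% L)%N.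
    move=> _ _; have -> : succ a = c by apply: val_inj; rewrite /= Hc.
    by rewrite Ec.
  rewrite /= => /eqP Hab /eqP Hac.
  have bc : b = c by apply: val_inj => /=; apply: (@mod_succ_inj L); [exact: ltn_ord|exact: ltn_ord|]; rewrite -Hab -Hac.
  by move: uw; rewrite -Eb -Ec bc eqxx.
have all : forall t (b : 'I_L), val b = ((val a0 + t) %% L)%N -> F b \in S.
  elim=> [|t IH] b Hb.
    have -> : b = a0.
      apply: val_inj. rewrite Hb addn0 modn_small //; exact: ltn_ord.

    by rewrite Ea0.
  pose b' : 'I_L := Ordinal (ltn_pmod (val a0 + t) Lpos).
  have -> : b = succ b'.
    by apply: val_inj; rewrite Hb /= -[((_ %% L)%N.+1)]addn1 modnDml addn1 addnS.
  by apply: step; apply: IH.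
have allb : forall b, F b \in S.
  move=> b; apply: (all (val b + (L - val a0))%N).
  have -> : (val a0 + (val b + (L - val a0)) = val b + L)%N.
    by rewrite addnCA subnKC // ltnW // ltn_ord.
  rewrite modnDr modn_small //; exact: ltn_ord.
have <- : #|[set F b | b in 'I_L]| = L by rewrite card_imset // card_ord.
apply: subset_leq_card; apply/subsetP => x /imsetP [b _ ->]; exact: allb.
Qed.
Lemma ev_mono n (A : {set 'I_n}) (i j : 'I_#|A|) :
  (i <= j)%N = (nat_of_ord (Order.enum_val i : 'I_n) <= nat_of_ord (Order.enum_val j : 'I_n))%N.
Proof. exact: (esym (@Order.EnumVal.le_enum_val _ _ Order.le_total A i j)). Qed.

Lemma sort_inj k n (h : 'I_k -> 'I_n) : (0 < k)%N -> injective h ->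
  exists (f : 'I_k -> 'I_n) (p : {perm 'I_k}),
    {homo f : x y / (x < y)%N >-> (x < y)%N} /\ forall i, h i = f (p i).
Proof.
move=> kpos hinj.
pose i0 : 'I_k := Ordinal kpos.
pose A := [set h i | i in 'I_k].
have cA : #|A| = k by rewrite card_imset // card_ord.
have H0 : h i0 \in A by apply: imset_f.
pose f (i : 'I_k) : 'I_n := Order.enum_val (cast_ord (esym cA) i).
pose p0 (i : 'I_k) : 'I_k := cast_ord cA (Order.enum_rank_in H0 (h i)).
have fp : forall i, f (p0 i) = h i.
  move=> i; rewrite /f /p0 cast_ordK Order.enum_rankK_in //; exact: imset_f.
have p0inj : injective p0 by move=> i j E; apply: hinj; rewrite -!fp E.
exists f, (perm p0inj); split; last by move=> i; rewrite permE fp.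
move=> x y xy; rewrite ltnNge -ev_mono -ltnNge; exact: xy.
Qed.

Lemma homo_inj k n (f : 'I_k -> 'I_n) :
  {homo f : x y / (x < y)%N >-> (x < y)%N} -> injective f.
Proof.
move=> hf i j E; apply: val_inj.
case: (ltngtP i j) => [H|H|//]; have := hf _ _ H; by rewrite E ltnn.
Qed.
Lemma claim k n (f g : 'I_k -> 'I_n) (finj : injective f) (ginj : injective g)
  (s t : {perm 'I_k}) (S : {set 'I_n * 'I_n})
  (HS : forall i, s i != t i -> ((f i, g (s i)) \in S) && ((f i, g (t i)) \in S))
  i : s i != t i ->
  exists u w, [/\ u \in S, w \in S, u != w, mxadj (f i, g (s i)) u & mxadj (f i, g (s i)) w].
Proof.
move=> Di.
pose j := (t^-1)%g (s i).
have tj : t j = s i by rewrite /j permKV.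
have ji : j != i by apply: contraNneq Di => E; rewrite -tj E.
have Dj : s j != t j by rewrite tj (inj_eq (@perm_inj _ s)).
exists (f i, g (t i)), (f j, g (t j)); split.
- by case/andP: (HS i Di).
- by case/andP: (HS j Dj).
- by rewrite xpair_eqE (inj_eq finj) eq_sym (negbTE ji).
- by rewrite /mxadj /= xpair_eqE (inj_eq ginj) (negbTE Di) andbF eqxx.
- by rewrite /mxadj /= xpair_eqE (inj_eq finj) eq_sym (negbTE ji) tj eqxx orbT.
Qed.

Lemma uniq_perm_cycle (R : nzRingType) n (Y : 'M[R]_n) L
  (Ycyc : is_cycle_graph (mxsupp Y) (@mxadj n) L) k (f g : 'I_k -> 'I_n)
  (finj : injective f) (ginj : injective g) (s t : {perm 'I_k}) :
  (forall i, Y (f i) (g (s i)) != 0) -> (forall i, Y (f i) (g (t i)) != 0) ->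
  (2 * k < L)%N -> s = t.
Proof.
move=> Hs Ht kL; apply/permP => i; apply/eqP; apply: contraT => Di.
pose S := [set u | [exists i, (s i != t i) && ((u == (f i, g (s i))) || (u == (f i, g (t i))))]].
have HS : forall i, s i != t i -> ((f i, g (s i)) \in S) && ((f i, g (t i)) \in S).
  by move=> l Dl; rewrite !inE; apply/andP; split; apply/existsP; exists l; rewrite Dl eqxx ?orbT.
have HS' : forall i, t i != s i -> ((f i, g (t i)) \in S) && ((f i, g (s i)) \in S).
  by move=> l Dl; rewrite andbC; apply: HS; rewrite eq_sym.
have SV : forall v, v \in S -> v \in mxsupp Y.
  move=> v; rewrite !inE => /existsP [l /andP [_ /orP [/eqP ->|/eqP ->]]] /=; by [].
have Scl : forall v, v \in S -> exists u w, [/\ u \in S, w \in S, u != w, mxadj v u & mxadj v w].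
  move=> v; rewrite {1}inE => /existsP [l /andP [Dl /orP [/eqP ->|/eqP ->]]].
    exact: (@claim _ _ f g finj ginj s t S HS l Dl).
  by apply: (@claim _ _ f g finj ginj t s S HS' l); rewrite eq_sym.
have vS : (f i, g (s i)) \in S by case/andP: (HS i Di).
have := @cycle_closed _ _ _ _ Ycyc S SV Scl _ vS.
pose h (p : 'I_k * bool) := if p.2 then (f p.1, g (s p.1)) else (f p.1, g (t p.1)).
have : S \subset h @: [set: ('I_k * bool)%type].
  apply/subsetP => v; rewrite inE => /existsP [l /andP [_ /orP [/eqP ->|/eqP ->]]].
    by apply/imsetP; exists (l, true); rewrite ?in_setT.
  by apply/imsetP; exists (l, false); rewrite ?in_setT.
move/subset_leq_card => H1 H2.
have := leq_trans H2 (leq_trans H1 (leq_imset_card _ _)).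
rewrite cardsT card_prod card_ord card_bool => H3.
by move: kL; rewrite mulnC ltnNge H3.
Qed.
Lemma minor_in_mono (R : comNzRingType) n (Y : 'M[R]_n) k q :
  is_minor k Y q ->
  in_ideal_gen (fun q => exists A : {set 'I_n * 'I_n},
                     [/\ mx_indep Y A, #|A| = k & q = \prod_(v in A) Y v.1 v.2]) q.
Proof.
case=> f [g [hf hg ->]].
have finj := @homo_inj _ _ f hf; have ginj := @homo_inj _ _ g hg.
rewrite /determinant; apply: ideal_sum => s.
under eq_bigr do rewrite mxE.
have [i Hi|H] := pickP (fun i => Y (f i) (g (s i)) == 0).
  by rewrite (bigD1 i) //= (eqP Hi) mul0r mulr0; apply: ideal0.
apply: idealM; apply: ideal_gen.
pose h (i : 'I_k) := (f i, g (s i)).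
have hinj : injective h by move=> i j [/finj].
exists (h @: [set: 'I_k]); split.
- split.
    apply/subsetP => v /imsetP [i _ ->]; rewrite inE /=; by rewrite H.
  move=> u v /imsetP [i _ ->] /imsetP [j _ ->].
  rewrite /mxadj /h /=; have [->|ij] := eqVneq i j; first by rewrite eqxx.
  by rewrite (inj_eq finj) (inj_eq ginj) (inj_eq (@perm_inj _ s)) (negbTE ij) andbF.
- by rewrite card_imset // cardsT card_ord.
- rewrite big_imset /=; last by move=> i j _ _ /hinj.
  by apply: eq_big => // i; rewrite inE.
Qed.

Lemma mono_in_minor (R : comNzRingType) n (Y : 'M[R]_n) L
  (Ycyc : is_cycle_graph (mxsupp Y) (@mxadj n) L) k (kpos : (0 < k)%N)
  (kL : (2 * k < L)%N) (A : {set 'I_n * 'I_n}) :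
  mx_indep Y A -> #|A| = k -> in_ideal_gen (is_minor k Y) (\prod_(v in A) Y v.1 v.2).
Proof.
move=> [Asupp Aind] cA.
pose e (i : 'I_k) : 'I_n * 'I_n := enum_val (cast_ord (esym cA) i).
have eA : forall i, e i \in A by move=> i; exact: enum_valP.
have einj : injective e by move=> i j /enum_val_inj /cast_ord_inj.
have Ae : e @: setT = A.
  apply/eqP; rewrite eqEcard card_imset // cardsT card_ord cA leqnn andbT.
  by apply/subsetP => v /imsetP [i _ ->].
have rinj : injective (fun i => (e i).1).
  move=> i j E; apply: einj; apply/eqP; apply: contraT => ne.
  by have := Aind _ _ (eA i) (eA j); rewrite /mxadj ne /= E eqxx.
have cinj : injective (fun i => (e i).2).
  move=> i j E; apply: einj; apply/eqP; apply: contraT => ne.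
  by have := Aind _ _ (eA i) (eA j); rewrite /mxadj ne /= E eqxx orbT.
have [f [pr [hf Hr]]] := @sort_inj _ _ _ kpos rinj.
have [g [pc [hg Hc]]] := @sort_inj _ _ _ kpos cinj.
have finj := @homo_inj _ _ f hf; have ginj := @homo_inj _ _ g hg.
pose sg := (pr^-1 * pc)%g.
have key1 : forall j, f (pr j) = (e j).1 by move=> j; rewrite Hr.
have key2 : forall j, g (sg (pr j)) = (e j).2 by move=> j; rewrite permM permK Hc.
have nz : forall i, Y (f i) (g (sg i)) != 0.
  move=> i; rewrite -(permKV pr i) key1 key2.
  by have := subsetP Asupp _ (eA (pr^-1 i)%g); rewrite inE.
have det_eq : \det (\matrix_(i, j) Y (f i) (g j)) = (-1) ^+ sg * \prod_(v in A) Y v.1 v.2.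
  rewrite /determinant (bigD1 sg) //= [X in _ + X]big1 ?addr0.
    congr (_ * _); under eq_bigr do rewrite mxE.
    rewrite (reindex_inj (@perm_inj _ pr)) -Ae big_imset /=; last by move=> i j _ _ /einj.
    by apply: eq_big => [i|i _]; [rewrite inE | rewrite key1 key2].
  move=> t tne; under eq_bigr do rewrite mxE.
  have [i Hi|H] := pickP (fun i => Y (f i) (g (t i)) == 0).
    by rewrite (bigD1 i) //= (eqP Hi) mul0r mulr0.
  have := @uniq_perm_cycle _ _ Y _ Ycyc _ f g finj ginj sg t nz (fun i => negbT (H i)) kL.
  by move=> E; move: tne; rewrite E eqxx.
have -> : \prod_(v in A) Y v.1 v.2 = (-1) ^+ sg * \det (\matrix_(i, j) Y (f i) (g j)).
  by rewrite det_eq mulrA -signr_addb addbb expr0 mul1r.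
apply: idealM; apply: ideal_gen; by exists f, g.
Qed.

Theorem lemma8p2 (K : fieldType) (m n : nat) (Y : 'M[{mpoly K[m]}]_n)
  (Yent : forall i j, Y i j = 0 \/ exists l : 'I_m, Y i j = 'X_l)
  (Ydist : forall i j i' j', Y i j != 0 -> Y i j = Y i' j' -> i = i' /\ j = j')
  (Ycyc : is_cycle_graph (mxsupp Y) (@mxadj n) (2 * n))
  (k : nat) (k_ge1 : (1 <= k)%N) (k_ltn : (k < n)%N) :
  forall p : {mpoly K[m]},
    in_ideal_gen (is_minor k Y) p <->
    in_ideal_gen (fun q => exists A : {set 'I_n * 'I_n},
                     [/\ mx_indep Y A, #|A| = k & q = \prod_(v in A) Y v.1 v.2]) p.
Proof.
move=> p; split; apply: ideal_trans.
  by move=> q Hq; apply: minor_in_mono.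
move=> q [A [HA cA ->]].
apply: (@mono_in_minor _ _ Y _ Ycyc k k_ge1 _ A HA cA).
by rewrite ltn_pmul2l.
Qed.
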